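(* Let $S$ be a $1$-synchronizable system. Let $\tau\in T_0(S)$ and $a_1,\dots,a_n,b_1,\dots,b_m\in\Sigma_M$ be such that $\tau\cdot !?a_1\cdots !?a_n\in T_0(S)$, $\tau\cdot !?b_1\cdots !?b_m\in T_0(S)$, and $\mathrm{src}(a_i)\neq\mathrm{src}(b_j)$ for all $i\in\{1,\dots,n\}$, $j\in\{1,\dots,m\}$. Then for every shuffle $c_1\cdots c_{n+m}$ of the word $a_1\cdots a_n$ with the word $b_1\cdots b_m$: $\tau\cdot !?c_1\cdots !?c_{n+m}\in T_0(S)$, and $\tau\cdot !?a_1\cdots !?a_n\cdot !?b_1\cdots !?b_m\equiv_S\tau\cdot !?c_1\cdots !?c_{n+m}$.
   Context: A message set $M=(\Sigma_M,N,\mathrm{src},\mathrm{dst})$: finite set of messages, $N\ge1$ peers, $\mathrm{src}(a)\neq\mathrm{dst}(a)\in\{1,\dots,N\}$. Actions $!a$ (by peer $\mathrm{src}(a)$), $?a$ (by peer $\mathrm{dst}(a)$); traces are finite action sequences; $!?a$ abbreviates $!a\cdot?a$. For a trace $\tau$, $\pi_!(\tau)$ is the sequence of sent messages; $\mathrm{buf}_{i\to j}(\tau)$ is the word $w$ (if any) with (sent on $i\to j$) $=$ (received on $i\to j$)$\cdot w$. $\tau$ is FIFO ($k$-bounded FIFO) if for all $i,j$ and prefixes $\tau'$, $\mathrm{buf}_{i\to j}(\tau')$ is defined (and has length $\le k$); synchronous if of the form $!?a_1\cdots!?a_k$. A system $S=(P_1,\dots,P_N)$: finite automata $P_i$ (all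 states accepting) over actions of peer $i$, with one FIFO channel per ordered pair $i\neq j$. A configuration: one control state per peer and contents $w_{i,j}$ of channels; stable if all channels empty. $!a$ ($\mathrm{src}(a)=i,\mathrm{dst}(a)=j$) moves $P_i$ and appends $a$ to $w_{i,j}$; $?a$ moves $P_j$ and removes $a$ from the head of $w_{i,j}$; $c_0$ is the initial configuration. $T_k(S)$ ($k\ge1$): $k$-bounded FIFO traces $\tau$ with $c_0\xrightarrow{\tau}c$ for some $c$; $T_0(S)$: synchronous such traces; $T_\omega(S)=\bigcup_kT_k(S)$. $\tau_1\equiv_S\tau_2$ iff $\tau_1,\tau_2\in T_\omega(S)$ and there is $c$ with $c_0\xrightarrow{\tau_1}c$ and $c_0\xrightarrow{\tau_2}c$. $ST_k(S)=\{\pi_!(\tau)\mid\tau\in T_k(S)\}\cup\{(\pi_!(\tau),c)\mid c_0\xrightarrow{\tau}c,\ c\text{ stable},\ \tau\in T_k(S)\}$; $S$ is $1$-synchronizable if $ST_0(S)=ST_1(S)$. *)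

(* Defs.v *)
From mathcomp Require Import all_boot.
Set Implicit Arguments. Unset Strict Implicit. Unset Printing Implicit Defensive.

(* A message set M = (Sigma_M, N, src, dst); peers are 'I_N (i.e. 0..N-1
   instead of 1..N). *)
Record msgset := MsgSet {
  msg : finType;
  npeers : nat;
  npeers_pos : 0 < npeers;
  src : msg -> 'I_npeers;
  dst : msg -> 'I_npeers;
  src_neq_dst : forall a, src a != dst a
}.

Section Defs.
Variable M : msgset.

Inductive action := Send of msg M | Recv of msg M.

Definition trace := seq action.

(* !?a = !a . ?a ;  syn [a1;...;ak] = !?a1 ... !?ak *)
Definition sr (a : msg M) : trace := [:: Send a; Recv a].
Definition syn (s : seq (msg M)) : trace := flatten (map sr s).

Definition sends (t : trace) : seq (msg M) :=
  pmap (fun x => if x is Send a then Some a else None) t.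

Definition on_chan (i j : 'I_(npeers M)) (a : msg M) := (src a == i) && (dst a == j).

Definition sent_on i j (t : trace) : seq (msg M) :=
  [seq a <- sends t | on_chan i j a].
Definition recv_on i j (t : trace) : seq (msg M) :=
  [seq a <- pmap (fun x => if x is Recv a then Some a else None) t | on_chan i j a].

(* buf_{i->j}(t) is defined (= w with sent = received . w) iff received is a
   prefix of sent; its length is then size sent - size received. *)
Definition buf_defined i j (t : trace) : Prop :=
  exists w, sent_on i j t = recv_on i j t ++ w.

Definition is_FIFO (t : trace) : Prop :=
  forall n i j, buf_defined i j (take n t).

Definition is_kbounded_FIFO (k : nat) (t : trace) : Prop :=
  forall n i j, exists w, sent_on i j (take n t) = recv_on i j (take n t) ++ w
                          /\ size w <= k.

Definition is_synchronous (t : trace) : Prop := exists s, t = syn s.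

(* A system: one finite automaton per peer (all states accepting).
   The automaton of peer i has states st i, initial state init i and
   a transition relation trans i; only transitions labelled by actions of
   peer i (!a with src a = i, ?a with dst a = i) are ever used. *)
Record system := System {
  st : 'I_(npeers M) -> finType;
  init : forall i, st i;
  trans : forall i, st i -> action -> st i -> bool
}.

Variable S : system.

Record config := Config {
  cstate : forall i, st S i;
  cchan : 'I_(npeers M) -> 'I_(npeers M) -> seq (msg M)
}.

Definition c0 : config := Config (init S) (fun _ _ => [::]).

Definition stable (c : config) : Prop := forall i j, cchan c i j = [::].

Definition others_unchanged (p : 'I_(npeers M)) (c c' : config) : Prop :=
  forall j, j != p -> cstate c' j = cstate c j.

Definition step (c : config) (x : action) (c' : config) : Prop :=
  match x with
  | Send a =>
      trans (cstate c (src a)) (Send a) (cstate c' (src a))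
      /\ others_unchanged (src a) c c'
      /\ cchan c' = (fun i j => if on_chan i j a then rcons (cchan c i j) a
                                else cchan c i j)
  | Recv a =>
      cchan c (src a) (dst a) = a :: cchan c' (src a) (dst a)
      /\ trans (cstate c (dst a)) (Recv a) (cstate c' (dst a))
      /\ others_unchanged (dst a) c c'
      /\ (forall i j, ~~ on_chan i j a -> cchan c' i j = cchan c i j)
  end.

Inductive reach : config -> trace -> config -> Prop :=
  | reach_nil c : reach c [::] c
  | reach_cons c x c' t c'' : step c x c' -> reach c' t c'' -> reach c (x :: t) c''.

Definition executable (t : trace) : Prop := exists c, reach c0 t c.

Definition T (k : nat) (t : trace) : Prop :=
  match k with
  | 0 => is_synchronous t /\ executable t
  | _ => is_kbounded_FIFO k t /\ executable t
  end.

Definition T_omega (t : trace) : Prop := exists k, 0 < k /\ T k t.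

Definition equivS (t1 t2 : trace) : Prop :=
  T_omega t1 /\ T_omega t2 /\ exists c, reach c0 t1 c /\ reach c0 t2 c.

Definition ST (k : nat) (x : seq (msg M) + (seq (msg M) * config)) : Prop :=
  match x with
  | inl s => exists t, T k t /\ sends t = s
  | inr (s, c) => exists t, T k t /\ sends t = s /\ reach c0 t c /\ stable c
  end.

Definition one_synchronizable : Prop := forall x, ST 0 x <-> ST 1 x.

End Defs.

Inductive shuffle {A : Type} : seq A -> seq A -> seq A -> Prop :=
  | shuffle_nil : shuffle [::] [::] [::]
  | shuffle_l x u v w : shuffle u v w -> shuffle (x :: u) v (x :: w)
  | shuffle_r x u v w : shuffle u v w -> shuffle u (x :: v) (x :: w).

(* Main.v *)
Require Import Defs.
From mathcomp Require Import all_boot.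
From Stdlib Require Import FunctionalExtensionality ClassicalEpsilon.
Set Implicit Arguments. Unset Strict Implicit. Unset Printing Implicit Defensive.

Section Work.
Variable M : msgset.
Variable S : system M.
Notation peer := ('I_(npeers M)).
Notation act := (action M).
Notation chans := (peer -> peer -> seq (msg M)).

Definition actor (x : act) : peer := match x with Send a => src a | Recv a => dst a end.
Definition proj (t : trace M) (i : peer) : trace M := [seq x <- t | actor x == i].

Inductive lrun (i : peer) : st S i -> trace M -> st S i -> Prop :=
| lrun_nil q : lrun q [::] q
| lrun_cons q x q' t q'' : trans q x q' -> lrun q' t q'' -> lrun q (x :: t) q''.

Lemma lrun_cat i (q q'' : st S i) t1 t2 :
  lrun q (t1 ++ t2) q'' <-> exists q', lrun q t1 q' /\ lrun q' t2 q''.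
Proof.
elim: t1 q => [|x t1 IH] q /=.
  split; first by move=> h; exists q; split => //; constructor.
  by case=> q' [h1 h2]; inversion h1; subst.
split.
  move=> h; inversion h as [|? ? q1 ? ? ht hr]; subst.
  have [q2 [h1 h2]] := (IH q1).1 hr.
  by exists q2; split=> //; econstructor; eauto.
case=> q' [h1 h2]; inversion h1; subst. econstructor; first by eauto.
by apply/IH; eauto.
Qed.

Definition chstep (ch : chans) (x : act) : option chans :=
  match x with
  | Send a => if size (ch (src a) (dst a)) == 0 then
      Some (fun i j => if on_chan i j a then rcons (ch i j) a else ch i j) else None
  | Recv a => match ch (src a) (dst a) with
      | b :: r => if b == a then Some (fun i j => if on_chan i j a then r else ch i j) else None
      | [::] => None end
  end.

Fixpoint crun (ch : chans) (t : trace M) : option chans :=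
  match t with
  | [::] => Some ch
  | x :: t' => match chstep ch x with Some ch' => crun ch' t' | None => None end
  end.

Lemma crun_cat ch t1 t2 :
  crun ch (t1 ++ t2) = match crun ch t1 with Some c => crun c t2 | None => None end.
Proof.
elim: t1 ch => [|x t1 IH] ch //=. by case: (chstep ch x).
Qed.

Definition upd (c : forall i : peer, st S i) (p : peer) (q : st S p) := dfwith c q.

Lemma reach_proj c t d : reach c t d -> forall i, lrun (cstate c i) (proj t i) (cstate d i).
Proof.
elim=> {c t d} [c|c x c' t c'' hs _ IH] i /=; first by constructor.
case: (eqVneq (actor x) i) => [<-|ne].
  econstructor; last by apply: IH.
  by case: x hs => a /= [] // ? [] ? [].
have e : cstate c' i = cstate c i.
  case: x hs ne => a /=.
    by case=> _ [H _] ne; apply: H; rewrite eq_sym.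
  by case=> _ [_ [H _]] ne; apply: H; rewrite eq_sym.
by rewrite -e; apply: IH.
Qed.

Lemma step_upd c x ch1 (q' : st S (actor x)) :
  chstep (cchan c) x = Some ch1 -> trans (cstate c (actor x)) x q' ->
  step c x (Config (upd (cstate c) q') ch1).
Proof.
rewrite /upd; case: x q' => a q' /= E H3.
- case: ifP E => // _ [<-]; split; first by rewrite dfwith_in.
  split=> //; move=> j ne /=; by rewrite dfwith_out // eq_sym.
- move: E; case Ech: (cchan c (src a) (dst a)) => [|b r] //; case: eqP => // -> [<-].
  split; first by rewrite /on_chan !eqxx.
  split; first by rewrite dfwith_in.
  split; first by move=> j ne /=; rewrite dfwith_out // eq_sym.
  by move=> i j /negbTE ->.
Qed.

Lemma proj_reach t c ch' (q : forall i, st S i) :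
  crun (cchan c) t = Some ch' -> (forall i, lrun (cstate c i) (proj t i) (q i)) ->
  reach c t (Config q ch').
Proof.
elim: t c => [|x t IH] c /=.
  move=> [<-] h. have e : cstate c = q.
    apply: functional_extensionality_dep => i. by have := h i; move=> h'; inversion h'.
  by case: c h e => cs cc /= _ ->; constructor.
case E: (chstep (cchan c) x) => [ch1|] // hc h.
have := h (actor x); rewrite /= eqxx => h1; inversion h1 as [|? ? q' ? ? H3 H4]; subst.
pose c' := Config (upd (cstate c) q') ch1.
apply: (@reach_cons _ _ c x c'); last first.
  apply: IH => // i. rewrite /c' /upd /=.
  case: (dfwithP (cstate c) q' i) => [//|j ne].
  by have := h j; rewrite /= (negbTE ne).
by apply: step_upd.
Qed.


Lemma crun_sent ch t ch' : crun ch t = Some ch' ->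
  forall i j, ch i j ++ sent_on i j t = recv_on i j t ++ ch' i j.
Proof.
elim: t ch => [|x t IH] ch /=; first by move=> [<-] i j; rewrite /sent_on /recv_on /= cats0.
case E: (chstep ch x) => [ch1|] // h i j; have := IH _ h i j.
rewrite /sent_on /recv_on /=; case: x E => a /=.
- case: ifP => // _ [<-]; case: ifP => /= _ <- //; by rewrite cat_rcons.
- case Ech: (ch (src a) (dst a)) => [|b r] //; case: eqP => // eba [<-].
  case: ifP => oc /=; last by [].
  move=> <-; move: oc; rewrite /on_chan => /andP [/eqP <- /eqP <-].
  by rewrite Ech eba.
Qed.

Lemma crun_bounded ch t ch' : (forall i j, size (ch i j) <= 1) -> crun ch t = Some ch' ->
  forall i j, size (ch' i j) <= 1.
Proof.
elim: t ch => [|x t IH] ch /=; first by move=> hb [<-].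
move=> hb; case E: (chstep ch x) => [ch1|] // h; apply: (IH ch1) => // i j.
case: x E => a /=.
- case: ifP => // /eqP hs [<-]; case: ifP => // /andP [/eqP <- /eqP <-].
  by rewrite size_rcons hs.
- case Ech: (ch (src a) (dst a)) => [|b r] //; case: eqP => // eba [<-].
  case: ifP => // _. have := hb (src a) (dst a).
  by rewrite Ech /= => /ltnW.
Qed.

Lemma crun_prefix ch t n : crun ch t <> None -> crun ch (take n t) <> None.
Proof.
rewrite -{1}(cat_take_drop n t) crun_cat; by case: (crun ch (take n t)).
Qed.

Definition ch0 : chans := fun _ _ => [::].

Lemma crun_kbounded t ch' : crun ch0 t = Some ch' -> is_kbounded_FIFO 1 t.
Proof.
move=> h n i j.
have : crun ch0 (take n t) <> None by apply: crun_prefix; rewrite h.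
case E: (crun ch0 (take n t)) => [chn|] // _.
exists (chn i j); split; first by have := crun_sent E i j.
by apply: (crun_bounded _ E).
Qed.

Lemma sends_cat (t1 t2 : trace M) : sends (t1 ++ t2) = sends t1 ++ sends t2.
Proof. by rewrite /sends pmap_cat. Qed.

Lemma syn_cat (s1 s2 : seq (msg M)) : syn (s1 ++ s2) = syn s1 ++ syn s2.
Proof. by rewrite /syn map_cat flatten_cat. Qed.

Lemma sends_syn (s : seq (msg M)) : sends (syn s) = s.
Proof. by elim: s => //= a s IH; rewrite /syn /= -/(syn s) /sends /= -/(sends _) IH. Qed.

Lemma proj_cat (t1 t2 : trace M) i : proj (t1 ++ t2) i = proj t1 i ++ proj t2 i.
Proof. by rewrite /proj filter_cat. Qed.

Lemma crun_syn ch s : (forall x, x \in s -> ch (src x) (dst x) = [::]) -> crun ch (syn s) = Some ch.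
Proof.
elim: s => //= a s IH h. rewrite /syn /= -/(syn s) /= h ?mem_head //= /on_chan !eqxx /=.
rewrite h ?mem_head //= eqxx.
have -> : (fun i j => if (src a == i) && (dst a == j) then [::]
          else if (src a == i) && (dst a == j) then rcons (ch i j) a else ch i j) = ch.
  apply: functional_extensionality => i; apply: functional_extensionality => j.
  case: ifP => [/andP [/eqP <- /eqP <-]|->] //; by rewrite h ?mem_head.
by apply: IH => x xs; apply: h; rewrite inE xs orbT.
Qed.


Lemma choose_fam (P : forall i : peer, st S i -> Prop) :
  (forall i, exists q, P i q) -> exists f : forall i, st S i, forall i, P i (f i).
Proof.
move=> H; exists (fun i => proj1_sig (constructive_indefinite_description _ (H i))).
move=> i; exact: proj2_sig (constructive_indefinite_description _ (H i)).
Qed.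

Definition E (s : seq (msg M)) := forall i, exists q, lrun (init S i) (proj (syn s) i) q.

Lemma sync_eq (t : trace M) : is_synchronous t -> t = syn (sends t).
Proof. by case=> s ->; rewrite sends_syn. Qed.

Lemma inl_lemma : one_synchronizable S -> forall t ch, crun ch0 t = Some ch ->
  (forall i, exists q, lrun (init S i) (proj t i) q) -> E (sends t).
Proof.
move=> H1 t ch hc hl; have [f hf] := choose_fam hl.
have r : reach (c0 S) t (Config f ch) by apply: proj_reach.
have : ST (S := S) 1 (inl (sends t)).
  exists t; split => //; split; [exact: crun_kbounded hc | by exists (Config f ch)].
case/(H1 _)=> t' [[sy [d rd]] et] i.
have := reach_proj rd i; rewrite (sync_eq sy) et => h; by exists (cstate d i).
Qed.

Lemma inr_lemma : one_synchronizable S -> forall t ch, crun ch0 t = Some ch ->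
  (forall i j, ch i j = [::]) -> forall f : forall i, st S i,
  (forall i, lrun (init S i) (proj t i) (f i)) ->
  forall i, lrun (init S i) (proj (syn (sends t)) i) (f i).
Proof.
move=> H1 t ch hc hst f hf.
have r : reach (c0 S) t (Config f ch) by apply: proj_reach.
have : ST (S := S) 1 (inr (sends t, Config f ch)).
  exists t; split; first by split; [exact: crun_kbounded hc | by exists (Config f ch)].
  by split => //; split.
case/(H1 _)=> t' [[sy _] [et [rd _]]] i.
have := reach_proj rd i; by rewrite (sync_eq sy) et.
Qed.

Lemma lrun_prefix i (q : st S i) t1 t2 q'' : lrun q (t1 ++ t2) q'' -> exists q', lrun q t1 q'.
Proof. by case/lrun_cat=> q' [h _]; exists q'. Qed.

Lemma E_prefix s1 s2 : E (s1 ++ s2) -> E s1.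
Proof.
move=> h i; have [q hq] := h i; move: hq; rewrite syn_cat proj_cat; exact: lrun_prefix.
Qed.


Lemma syn_cons a (s : seq (msg M)) : syn (a :: s) = Send a :: Recv a :: syn s.
Proof. by []. Qed.

Lemma proj_cons x (t : trace M) i :
  proj (x :: t) i = if actor x == i then x :: proj t i else proj t i.
Proof. by []. Qed.

Lemma sends_cons_s a (t : trace M) : sends (Send a :: t) = a :: sends t.
Proof. by []. Qed.

Lemma sends_cons_r a (t : trace M) : sends (Recv a :: t) = sends t.
Proof. by []. Qed.

Lemma dst_neq (a : msg M) i : src a == i -> (dst a == i) = false.
Proof. by move/eqP=> <-; apply/negbTE; rewrite eq_sym src_neq_dst. Qed.

Lemma cprime : one_synchronizable S -> forall s alpha a b,
  E (s ++ alpha ++ [:: a]) -> E (s ++ b :: alpha) ->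
  (forall x, x \in alpha -> src x != src b) -> src a != src b ->
  E (s ++ b :: alpha ++ [:: a]).
Proof.
move=> H1 s alpha a b h1 h2 hal hab.
pose t := syn s ++ Send b :: syn alpha ++ [:: Send a].
have -> : s ++ b :: alpha ++ [:: a] = sends t.
  by rewrite /t sends_cat sends_syn sends_cons_s sends_cat sends_syn.
have [ch hc] : exists ch, crun ch0 t = Some ch.
  rewrite /t crun_cat crun_syn //= crun_cat crun_syn /=.
    rewrite /on_chan [src b == _]eq_sym (negbTE hab) /=; by eexists.
  by move=> x /hal hx /=; rewrite /on_chan eq_sym (negbTE hx).
apply: (inl_lemma H1 hc) => i.
rewrite /t !proj_cat proj_cons /= proj_cat /proj /= -/(proj (syn alpha) i).
case: (eqVneq (src a) i) => [ea|na].
  have nb : (src b == i) = false by rewrite -ea eq_sym (negbTE hab).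
  rewrite nb; have [q hq] := h1 i; exists q; move: hq.
  by rewrite !syn_cat !proj_cat /proj /= ea eqxx (dst_neq (introT eqP ea)) cats0.
rewrite cats0; case: (eqVneq (src b) i) => [eb|nb'].
  have [q hq] := h2 i; exists q; move: hq.
  by rewrite syn_cat syn_cons proj_cat /proj /= eb eqxx (dst_neq (introT eqP eb)).
idtac; have [q hq] := h1 i; move: hq.
rewrite !syn_cat !proj_cat catA; exact: lrun_prefix.
Qed.


Lemma catx (s : seq (msg M)) x w : s ++ x :: w = (s ++ [:: x]) ++ w.
Proof. by rewrite -catA. Qed.

Lemma Fl : one_synchronizable S -> forall s a v,
  E (s ++ [:: a]) -> E (s ++ v) -> (forall x, x \in v -> src x != src a) -> E (s ++ a :: v).
Proof.
move=> H1 s a v; elim/last_ind: v => [|v' b IH] h1 h2 hv //.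
have h2' : E (s ++ v' ++ [:: b]) by rewrite -cats1 in h2.
have hv' : forall x, x \in v' -> src x != src a.
  by move=> x xv; apply: hv; rewrite -cats1 mem_cat xv.
have hp : E (s ++ v') by apply: (E_prefix (s2 := [:: b])); rewrite -catA.
have := cprime H1 h2' (IH h1 hp hv') hv'.
rewrite -cats1; apply; apply: hv; by rewrite -cats1 mem_cat inE eqxx orbT.
Qed.

Lemma G : one_synchronizable S -> forall u v w, shuffle u v w -> forall s,
  E (s ++ u) -> E (s ++ v) -> (forall a b, a \in u -> b \in v -> src a != src b) ->
  E (s ++ w).
Proof.
move=> H1 u v w; elim => {u v w} [//|x u v w _ IH|x u v w _ IH] s hu hv hd.
- rewrite catx; apply: IH.
  + by rewrite -catx.
  + rewrite -catx; apply: Fl => //; first by apply: (E_prefix (s2 := u)); rewrite -catx.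
    by move=> y yv; rewrite eq_sym; apply: hd; rewrite ?mem_head.
  + by move=> a b au bv; apply: hd => //; rewrite inE au orbT.
- rewrite catx; apply: IH.
  + rewrite -catx; apply: Fl => //; first by apply: (E_prefix (s2 := v)); rewrite -catx.
    by move=> y yv; apply: hd; rewrite ?mem_head.
  + by rewrite -catx.
  + by move=> a b au bv; apply: hd => //; rewrite inE bv orbT.
Qed.


Definition D i (x y : seq (msg M)) := forall q,
  lrun (init S i) (proj (syn x) i) q -> lrun (init S i) (proj (syn y) i) q.

Lemma blk_proj (x y : msg M) j : src x != src y ->
  (~~ ((dst x == j) && (src y == j)) ->
     proj [:: Send y; Send x; Recv x; Recv y] j = proj (syn [:: x; y]) j) /\
  ((dst x == j) && (src y == j) ->
     proj [:: Send y; Send x; Recv x; Recv y] j = proj (syn [:: y; x]) j).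
Proof.
move=> hxy; have hx := src_neq_dst x; have hy := src_neq_dst y.
rewrite /proj /syn /=.
case: (eqVneq (src y) j) => [ey|ny].
  have nx : (src x == j) = false by rewrite -ey (negbTE hxy).
  have ny' : (dst y == j) = false by rewrite -ey eq_sym (negbTE hy).
  rewrite nx ny' /= andbT; by case: (dst x == j).
by rewrite andbF; split.
Qed.

Lemma crun_syn_empty ch s : (forall i j, ch i j = [::]) -> crun ch (syn s) = Some ch.
Proof. by move=> h; apply: crun_syn => x _; apply: h. Qed.

Lemma SWP : one_synchronizable S -> forall s s' (x y : msg M) i,
  src x != src y -> ~~ ((dst x == i) && (src y == i)) ->
  E (s ++ [:: x; y] ++ s') -> E (s ++ [:: y; x] ++ s') ->
  D i (s ++ [:: x; y] ++ s') (s ++ [:: y; x] ++ s').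
Proof.
move=> H1 s s' x y i hxy hi h1 h2 q hq.
pose t := syn s ++ [:: Send y; Send x; Recv x; Recv y] ++ syn s'.
have et : s ++ [:: y; x] ++ s' = sends t by rewrite /t !sends_cat !sends_syn.
have [ch [hc hst]] : exists ch, crun ch0 t = Some ch /\ forall i j, ch i j = [::].
  have e1 : (src y == src x) = false by rewrite eq_sym (negbTE hxy).
  rewrite /t crun_cat crun_syn // crun_cat /= /on_chan. do 6 (rewrite /= ?e1 ?(negbTE hxy) ?eqxx).
  match goal with |- exists ch, crun ?c _ = _ /\ _ => set ch4 := c end.
  have h4 : forall i j, ch4 i j = [::].
    move=> i0 j; rewrite /ch4; case: ifP => // k1; case: ifP => // k2.
    by rewrite k2 k1.
  exists ch4; split => //; exact: crun_syn_empty.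
have hp : forall j, proj t j = proj (syn s) j ++ proj [:: Send y; Send x; Recv x; Recv y] j ++ proj (syn s') j.
  by move=> j; rewrite /t !proj_cat.
have hp' : forall z j, proj (syn (s ++ z ++ s')) j = proj (syn s) j ++ proj (syn z) j ++ proj (syn s') j.
  by move=> z j; rewrite !syn_cat !proj_cat.
have [f hf] : exists f : forall j, st S j, forall j, lrun (init S j) (proj t j) (f j).
  apply: (choose_fam (P := fun j q => lrun (init S j) (proj t j) q)) => j.
  have [b1 b2] := blk_proj j hxy.
  case: (boolP ((dst x == j) && (src y == j))) => hj.
    have [q' hq'] := h2 j; exists q'; by rewrite hp b2 // -hp'.
  have [q' hq'] := h1 j; exists q'; by rewrite hp b1 // -hp'.
pose f' := dfwith f q.
have hf' : forall j, lrun (init S j) (proj t j) (f' j).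
  move=> j; rewrite /f'; case: (dfwithP f q j) => [|j' _]; last by apply: hf.
  have [b1 _] := blk_proj i hxy; by rewrite hp b1 // -hp'.
have := inr_lemma H1 hc hst hf' i; by rewrite -et /f' dfwith_in.
Qed.



Lemma D_refl i x : D i x x. Proof. by []. Qed.
Lemma D_trans i x y z : D i x y -> D i y z -> D i x z.
Proof. by move=> h1 h2 q /h1 /h2. Qed.

Lemma Bub : one_synchronizable S -> forall i (y : msg M) s u r,
  src y != i -> (forall a, a \in u -> src a != src y) ->
  (forall u1 u2, u1 ++ u2 = u -> E (s ++ u1 ++ y :: u2 ++ r)) ->
  D i (s ++ u ++ y :: r) (s ++ y :: u ++ r).
Proof.
move=> H1 i y s u; elim/last_ind: u => [|u' x IH] r hy hu hE; first exact: D_refl.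
have e1 : s ++ rcons u' x ++ y :: r = (s ++ u') ++ [:: x; y] ++ r.
  by rewrite -cats1 -!catA.
have e2 : (s ++ u') ++ [:: y; x] ++ r = s ++ u' ++ y :: x :: r by rewrite -!catA.
have e3 : s ++ y :: rcons u' x ++ r = s ++ y :: u' ++ x :: r by rewrite -cats1 -!catA.
rewrite e1 e3; apply: (D_trans (y := (s ++ u') ++ [:: y; x] ++ r)).
- apply: SWP => //.
  + by apply: hu; rewrite -cats1 mem_cat inE eqxx orbT.
  + by rewrite negb_and hy orbT.
  + by rewrite -e1; have := hE (rcons u' x) [::] (cats0 _).
  + by rewrite e2; apply: (hE u' [:: x]); rewrite cats1.
- rewrite e2; apply: IH => //.
  + by move=> a au; apply: hu; rewrite -cats1 mem_cat au.
  + move=> u1 u2 eu; have h := hE u1 (rcons u2 x).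
    rewrite -!cats1 (catA u1 u2 [:: x]) eu in h; have := h erefl; by rewrite -catA.
Qed.

Lemma shuffle_catl (A : Type) (p u v w : seq A) : shuffle u v w -> shuffle (p ++ u) v (p ++ w).
Proof. by elim: p => //= x p IH h; apply: shuffle_l; apply: IH. Qed.

Lemma shuffle_nill (A : Type) (v : seq A) : shuffle [::] v v.
Proof. by elim: v => [|x v IH]; [exact: shuffle_nil | exact: shuffle_r]. Qed.

Lemma shuffle_app (A : Type) (u v : seq A) : shuffle u v (u ++ v).
Proof. by rewrite -[u]cats0 -catA /=; apply: shuffle_catl; apply: shuffle_nill. Qed.

Lemma shuffle_sym (A : Type) (u v w : seq A) : shuffle u v w -> shuffle v u w.
Proof.
elim=> {u v w} [|x u v w _ IH|x u v w _ IH]; [exact: shuffle_nil|exact: shuffle_r|exact: shuffle_l].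
Qed.

Lemma shuffle_mid (A : Type) (u1 u2 v : seq A) y :
  shuffle (u1 ++ u2) (y :: v) (u1 ++ y :: u2 ++ v).
Proof. by apply: shuffle_catl; apply: shuffle_r; apply: shuffle_app. Qed.

Lemma Ch : one_synchronizable S -> forall u v w, shuffle u v w -> forall s i,
  (forall b, b \in v -> src b != i) ->
  (forall w', shuffle u v w' -> E (s ++ w')) ->
  (forall a b, a \in u -> b \in v -> src a != src b) ->
  D i (s ++ u ++ v) (s ++ w).
Proof.
move=> H1 u v w; elim => {u v w} [|x u v w _ IH|y u v w _ IH] s i hv hE hd.
- exact: D_refl.
- rewrite /= (catx s x (u ++ v)) (catx s x w); apply: IH => //.
  + by move=> w' hw; rewrite -catx; apply: hE; apply: shuffle_l.
  + by move=> a b au bv; apply: hd => //; rewrite inE au orbT.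
- apply: (D_trans (y := s ++ y :: u ++ v)).
    apply: Bub => //.
  + by apply: hv; rewrite mem_head.
  + by move=> a au; apply: hd; rewrite ?mem_head.
  + by move=> u1 u2 eu; apply: hE; rewrite -eu; apply: shuffle_mid.
  rewrite (catx s y (u ++ v)) (catx s y w); apply: IH.
  + by move=> b bv; apply: hv; rewrite inE bv orbT.
  + by move=> w' hw; rewrite -catx; apply: hE; apply: shuffle_r.
  + by move=> a b au bv; apply: hd => //; rewrite inE bv orbT.
Qed.


Lemma exec_E s : executable S (syn s) -> E s.
Proof. by case=> d rd i; exists (cstate d i); apply: (reach_proj rd i). Qed.

Lemma fam_reach s (f : forall i, st S i) :
  (forall i, lrun (init S i) (proj (syn s) i) (f i)) -> reach (c0 S) (syn s) (Config f ch0).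
Proof. by move=> h; apply: proj_reach => //; apply: crun_syn_empty. Qed.

Lemma E_exec s : E s -> executable S (syn s).
Proof.
move=> h; have [f hf] := choose_fam h; exists (Config f ch0); exact: fam_reach.
Qed.

Lemma Tom_syn s : executable S (syn s) -> T_omega S (syn s).
Proof.
move=> h; exists 1; split => //; split => //.
by apply: (@crun_kbounded _ ch0); apply: crun_syn_empty.
Qed.

Lemma main_sec (tau : trace M) (u v : seq (msg M)) :
  one_synchronizable S ->
  T S 0 tau ->
  T S 0 (tau ++ syn u) ->
  T S 0 (tau ++ syn v) ->
  (forall a b, a \in u -> b \in v -> src a != src b) ->
  forall w, shuffle u v w ->
    T S 0 (tau ++ syn w) /\ equivS S (tau ++ syn u ++ syn v) (tau ++ syn w).
Proof.
move=> H1 [[s0 ->] _] [_ hu] [_ hv] hd w hw.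
rewrite -syn_cat in hu; rewrite -syn_cat in hv.
have Eu := exec_E hu; have Ev := exec_E hv.
have hEall : forall w', shuffle u v w' -> E (s0 ++ w').
  by move=> w' h; apply: (G H1 h Eu Ev hd).
have Ew := E_exec (hEall _ hw).
split; first by split; [exists (s0 ++ w); rewrite syn_cat | rewrite -syn_cat].
rewrite -!syn_cat.
have hco : forall i, exists q, lrun (init S i) (proj (syn (s0 ++ u ++ v)) i) q /\
                               lrun (init S i) (proj (syn (s0 ++ w)) i) q.
  move=> i; case: (boolP (all (fun b => src b != i) v)) => hb.
    have [q hq] := hEall _ (shuffle_app u v) i; exists q; split => //.
    apply: (Ch H1 hw) => //; by move=> b bv; apply: (allP hb).
  move/allPn: hb => [b bv /negPn /eqP eb].
  have hu' : forall a, a \in u -> src a != i by move=> a au; rewrite -eb; apply: hd.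
  have hEall' : forall w', shuffle v u w' -> E (s0 ++ w').
    by move=> w' /shuffle_sym; apply: hEall.
  have hd' : forall a b, a \in v -> b \in u -> src a != src b.
    by move=> a b' av bu; rewrite eq_sym; apply: hd.
  have [q hq] := hEall' _ (shuffle_app v u) i; exists q; split.
    by apply: (Ch H1 (shuffle_sym (shuffle_app u v))) => //.
  by apply: (Ch H1 (shuffle_sym hw)) => //.
have [f hf] := choose_fam hco.
split; first by apply: Tom_syn; apply: E_exec; apply: hEall; apply: shuffle_app.
split; first by apply: Tom_syn.
by exists (Config f ch0); split; apply: fam_reach => i; case: (hf i).
Qed.

End Work.

Theorem lemma4p6 (M : msgset) (S : system M) (tau : trace M)
    (u v : seq (msg M)) :
  one_synchronizable S ->
  T S 0 tau ->
  T S 0 (tau ++ syn u) ->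
  T S 0 (tau ++ syn v) ->
  (forall a b, a \in u -> b \in v -> src a != src b) ->
  forall w, shuffle u v w ->
    T S 0 (tau ++ syn w) /\ equivS S (tau ++ syn u ++ syn v) (tau ++ syn w).
Proof. exact: main_sec. Qed.
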